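(* Work in the Poincaré ball model of $\mathbb{H}^3$. For $a>1$ let $P_{3,4}(a)$ be the intersection of the open unit ball with the sets $H(ap)$ for all $p\in\{(\pm1,\pm1,\pm1)/\sqrt3\}$. Then: (1) For $a>\sqrt3$, the four spheres $S(a(\pm1,\pm1,1)/\sqrt3)$ have a common point $p$ with $|p|<1$, and $P_{3,4}(a)$ is a finite octahedron. For $a=\sqrt3$ the octahedron is ideal with dihedral angle $\pi/2$. As $a\to\infty$, the dihedral angle increases to $\arccos(-1/3)$, the dihedral angle of the Euclidean octahedron. (2) For $a=\sqrt{3/2}$, $S(a(1,1,1)/\sqrt3)$ and $S(a(1,-1,1)/\sqrt3)$ touch. (3) For $a<\sqrt{3/2}$, $S(a(1,1,1)/\sqrt3)$ and $S(a(1,-1,1)/\sqrt3)$ are disjoint. (4) For $a>\sqrt{3/2}$, $S(a(1,1,1)/\sqrt3)$ and $S(a(1,-1,1)/\sqrt3)$ meet at a dihedral angle $\alpha$ with $\cos\alpha=\frac{3-a^2}{3(a^2-1)}$. (5) For $\sqrt3>a>\sqrt{3/2}$, $P_{3,4}(a)$ is hyperideal.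
   Context: For $x\in\mathbb{R}^3$ with $|x|>1$, $S(x)$ is the sphere centered at $x$ with radius $\sqrt{|x|^2-1}$ (it meets the unit sphere orthogonally and represents a hyperbolic plane), and $H(x)$ is the unbounded component of $\mathbb{R}^3\setminus S(x)$. The octahedron is finite if the four face-spheres around a vertex meet inside the open unit ball, ideal if they meet on the unit sphere, and hyperideal if adjacent face-spheres intersect but the four spheres around a vertex have no common point in the closed unit ball. *)

(* Defs.v *)
From Stdlib Require Import Reals Lra.
Open Scope R_scope.

Record vec3 := mkV { vx : R; vy : R; vz : R }.

Definition vsub (u v : vec3) : vec3 := mkV (vx u - vx v) (vy u - vy v) (vz u - vz v).
Definition vscale (c : R) (u : vec3) : vec3 := mkV (c * vx u) (c * vy u) (c * vz u).
Definition dot (u v : vec3) : R := vx u * vx v + vy u * vy v + vz u * vz v.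
Definition norm2 (u : vec3) : R := dot u u.
Definition vnorm (u : vec3) : R := sqrt (norm2 u).

Definition srad (x : vec3) : R := sqrt (norm2 x - 1).

Definition onS (x p : vec3) : Prop := norm2 (vsub p x) = norm2 x - 1.

(* H(x): unbounded component of R^3 \ S(x), i.e. the exterior of the ball
   bounded by S(x) *)
Definition inH (x p : vec3) : Prop := norm2 (vsub p x) > norm2 x - 1.

Definition sg (b : bool) : R := if b then 1 else -1.

Definition fc (a : R) (b1 b2 b3 : bool) : vec3 :=
  vscale (a / sqrt 3) (mkV (sg b1) (sg b2) (sg b3)).

Definition P34 (a : R) (p : vec3) : Prop :=
  norm2 p < 1 /\ forall b1 b2 b3 : bool, inH (fc a b1 b2 b3) p.

(* The faces of P34 a lie on the spheres S(fc a b1 b2 b3).  The vertex of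
   the octahedron in direction (sign s) e_i is surrounded by the four faces
   whose i-th sign equals s. *)
Definition coord (i : nat) (b1 b2 b3 : bool) : bool :=
  match i with 0 => b1 | 1 => b2 | _ => b3 end.

Definition vertex_spheres_meet (Reg : vec3 -> Prop) (a : R) (i : nat) (s : bool) : Prop :=
  exists p, Reg p /\
    forall b1 b2 b3 : bool, coord i b1 b2 b3 = s -> onS (fc a b1 b2 b3) p.

Definition open_ball (p : vec3) : Prop := norm2 p < 1.
Definition unit_sphere (p : vec3) : Prop := norm2 p = 1.
Definition closed_ball (p : vec3) : Prop := norm2 p <= 1.

(* two face-spheres intersect (as hyperbolic planes: inside the open ball) *)
Definition planes_intersect (x y : vec3) : Prop :=
  exists p, open_ball p /\ onS x p /\ onS y p.

Definition adjacent_intersect (a : R) : Prop :=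
  forall b1 b2 b3 : bool,
    planes_intersect (fc a b1 b2 b3) (fc a (negb b1) b2 b3) /\
    planes_intersect (fc a b1 b2 b3) (fc a b1 (negb b2) b3) /\
    planes_intersect (fc a b1 b2 b3) (fc a b1 b2 (negb b3)).

Definition finite_oct (a : R) : Prop :=
  forall (i : nat) (s : bool), (i < 3)%nat -> vertex_spheres_meet open_ball a i s.

Definition ideal_oct (a : R) : Prop :=
  forall (i : nat) (s : bool), (i < 3)%nat -> vertex_spheres_meet unit_sphere a i s.

Definition hyperideal_oct (a : R) : Prop :=
  adjacent_intersect a /\
  forall (i : nat) (s : bool), (i < 3)%nat -> ~ vertex_spheres_meet closed_ball a i s.

Definition spheres_touch (x y : vec3) : Prop :=
  exists! p, onS x p /\ onS y p.

Definition spheres_disjoint (x y : vec3) : Prop :=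
  ~ exists p, onS x p /\ onS y p.

(* S(x) and S(y) meet at dihedral angle alpha: they meet (inside the ball),
   and at every common point q the angle of the region exterior to both
   spheres (the wedge bounded by them) is alpha; that angle is pi minus the
   angle between the outward unit normals (q-x)/r_x and (q-y)/r_y. *)
Definition meet_at_angle (x y : vec3) (alpha : R) : Prop :=
  0 <= alpha <= PI /\
  planes_intersect x y /\
  forall q, onS x q -> onS y q ->
    cos alpha = - (dot (vsub q x) (vsub q y) / (srad x * srad y)).

Definition oct_dihedral (a alpha : R) : Prop :=
  forall b1 b2 b3 : bool,
    meet_at_angle (fc a b1 b2 b3) (fc a (negb b1) b2 b3) alpha /\
    meet_at_angle (fc a b1 b2 b3) (fc a b1 (negb b2) b3) alpha /\
    meet_at_angle (fc a b1 b2 b3) (fc a b1 b2 (negb b3)) alpha.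

(* Main.v *)
Require Import Defs.
From Stdlib Require Import Reals Lra Lia Psatz.
Open Scope R_scope.

Lemma sqrt3_sq : sqrt 3 * sqrt 3 = 3.
Proof. apply sqrt_sqrt; lra. Qed.
Lemma sqrt3_pos : 0 < sqrt 3.
Proof. apply sqrt_lt_R0; lra. Qed.

Lemma k_sq a : (a / sqrt 3) * (a / sqrt 3) = a * a / 3.
Proof. pose proof sqrt3_pos. rewrite <- sqrt3_sq at 3. field. lra. Qed.

Lemma onS_fc a b1 b2 b3 p :
  onS (fc a b1 b2 b3) p <->
  norm2 p + 1 = 2 * (a / sqrt 3) * (sg b1 * vx p + sg b2 * vy p + sg b3 * vz p).
Proof.
  unfold onS, fc, norm2, dot, vsub, vscale; simpl.
  split; intro H; nra.
Qed.

Lemma norm2_fc a b1 b2 b3 : norm2 (fc a b1 b2 b3) = a * a.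
Proof.
  pose proof (k_sq a).
  unfold fc, norm2, dot, vscale; destruct b1, b2, b3; simpl; nra.
Qed.

Lemma angle_gen x y q N D :
  norm2 x = N -> norm2 y = N -> dot x y = D -> N > 1 ->
  onS x q -> onS y q ->
  - (dot (vsub q x) (vsub q y) / (srad x * srad y)) = (1 - D) / (N - 1).
Proof.
  intros Hx Hy Hd HN Sx Sy.
  unfold srad; rewrite Hx, Hy, sqrt_sqrt by lra.
  assert (E: dot (vsub q x) (vsub q y) = D - 1).
  { unfold onS in *. rewrite Hx in Sx; rewrite Hy in Sy. rewrite <- Hd.
    rewrite <- Hx in Sx. rewrite <- Hy in Sy.
    unfold norm2, dot, vsub in *; simpl in *. nra. }
  rewrite E. field. lra.
Qed.

Lemma dot_adj a b1 b2 b3 :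
  dot (fc a b1 b2 b3) (fc a (negb b1) b2 b3) = a * a / 3 /\
  dot (fc a b1 b2 b3) (fc a b1 (negb b2) b3) = a * a / 3 /\
  dot (fc a b1 b2 b3) (fc a b1 b2 (negb b3)) = a * a / 3.
Proof.
  pose proof (k_sq a).
  unfold fc, dot, vscale; destruct b1, b2, b3; simpl; repeat split; nra.
Qed.

Lemma u_ex k : 0 < k -> k * k > 1/2 ->
  exists u, u * u - 2 * k * u + 1/2 = 0 /\ 2 * u * u < 1.
Proof.
  intros Hk Hk2.
  pose (s := sqrt (k * k - 1/2)).
  assert (Hs : s * s = k * k - 1/2) by (apply sqrt_sqrt; lra).
  assert (Hs0 : 0 < s) by (apply sqrt_lt_R0; lra).
  exists (k - s). split; [nra|].
  assert (s < k) by nra. nra.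
Qed.

Lemma t_ex k : 1 < k ->
  exists t, t * t - 2 * k * t + 1 = 0 /\ 0 < t < 1.
Proof.
  intros Hk.
  pose (s := sqrt (k * k - 1)).
  assert (Hs : s * s = k * k - 1) by (apply sqrt_sqrt; nra).
  assert (Hs0 : 0 < s) by (apply sqrt_lt_R0; nra).
  exists (k - s). assert (s < k) by nra. split; [nra|]. split; nra.
Qed.

Lemma adj_int a : 0 < a -> a * a > 3/2 -> adjacent_intersect a.
Proof.
  intros Ha Ha2.
  pose proof (k_sq a) as K. pose proof sqrt3_pos.
  assert (Hk : 0 < a / sqrt 3) by (apply Rdiv_lt_0_compat; lra).
  destruct (u_ex (a / sqrt 3)) as [u [Hu1 Hu2]]; [lra | nra |].
  intros b1 b2 b3; split; [|split].
  - exists (mkV 0 (u * sg b2) (u * sg b3)).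
    split; [|split]; [| rewrite onS_fc .. ];
    unfold open_ball, norm2, dot; destruct b1, b2, b3; simpl; nra.
  - exists (mkV (u * sg b1) 0 (u * sg b3)).
    split; [|split]; [| rewrite onS_fc .. ];
    unfold open_ball, norm2, dot; destruct b1, b2, b3; simpl; nra.
  - exists (mkV (u * sg b1) (u * sg b2) 0).
    split; [|split]; [| rewrite onS_fc .. ];
    unfold open_ball, norm2, dot; destruct b1, b2, b3; simpl; nra.
Qed.

Lemma oct_dihedral_gen a alpha : 0 < a -> a * a > 3/2 -> 0 <= alpha <= PI ->
  cos alpha = (3 - a ^ 2) / (3 * (a ^ 2 - 1)) -> oct_dihedral a alpha.
Proof.
  intros Ha Ha2 Hal Hc.
  pose proof (adj_int a Ha Ha2) as AI.
  assert (G : (3 - a ^ 2) / (3 * (a ^ 2 - 1)) = (1 - a * a / 3) / (a * a - 1)).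
  { field. nra. }
  intros b1 b2 b3. destruct (AI b1 b2 b3) as [I1 [I2 I3]].
  destruct (dot_adj a b1 b2 b3) as [D1 [D2 D3]].
  split; [|split]; (split; [exact Hal | split; [assumption|]]);
  intros q Sx Sy; rewrite Hc, G; symmetry; eapply angle_gen; eauto;
  try apply norm2_fc; nra.
Qed.

Lemma gt_sqrt_sq c a : 0 <= c -> sqrt c < a -> c < a * a /\ 0 < a.
Proof. intros Hc H. pose proof (sqrt_sqrt c Hc). pose proof (sqrt_pos c). nra. Qed.

Lemma lt_sqrt_sq c a : 0 <= c -> 0 <= a -> a < sqrt c -> a * a < c.
Proof. intros Hc Ha H. pose proof (sqrt_sqrt c Hc). pose proof (sqrt_pos c). nra. Qed.

Lemma k_gt1 a : sqrt 3 < a -> 1 < a / sqrt 3.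
Proof. intros H. pose proof sqrt3_pos. apply (Rmult_lt_reg_r (sqrt 3)); [lra|].
  field_simplify; lra. Qed.

Lemma vertex_meet a t : t * t - 2 * (a / sqrt 3) * t + 1 = 0 ->
  forall (i : nat) (s : bool), (i < 3)%nat ->
  exists p, norm2 p = t * t /\
    forall b1 b2 b3 : bool, coord i b1 b2 b3 = s -> onS (fc a b1 b2 b3) p.
Proof.
  intros Ht i s Hi.
  destruct i as [|[|[|i]]]; [| | | lia].
  - exists (mkV (t * sg s) 0 0). split.
    + unfold norm2, dot; destruct s; simpl; nra.
    + intros b1 b2 b3 E; simpl in E; subst; rewrite onS_fc;
      unfold norm2, dot; repeat match goal with b : bool |- _ => destruct b end; simpl; nra.
  - exists (mkV 0 (t * sg s) 0). split.
    + unfold norm2, dot; destruct s; simpl; nra.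
    + intros b1 b2 b3 E; simpl in E; subst; rewrite onS_fc;
      unfold norm2, dot; repeat match goal with b : bool |- _ => destruct b end; simpl; nra.
  - exists (mkV 0 0 (t * sg s)). split.
    + unfold norm2, dot; destruct s; simpl; nra.
    + intros b1 b2 b3 E; simpl in E; subst; rewrite onS_fc;
      unfold norm2, dot; repeat match goal with b : bool |- _ => destruct b end; simpl; nra.
Qed.

Lemma no_vertex a : 0 < a -> a * a < 3 -> forall (i : nat) (s : bool),
  ~ vertex_spheres_meet closed_ball a i s.
Proof.
  intros Ha Ha3 i s [p [_ Hp]].
  pose proof (k_sq a) as K. pose proof sqrt3_pos.
  assert (Hk : 0 < a / sqrt 3) by (apply Rdiv_lt_0_compat; lra).
  assert (Z: forall c, a / sqrt 3 * c = 0 -> c = 0) by (intros c Hc; apply (Rmult_eq_reg_l (a / sqrt 3)); lra).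
  destruct i as [|[|i]].
  - pose proof (Hp s true true eq_refl) as A1. pose proof (Hp s true false eq_refl) as A2.
    pose proof (Hp s false true eq_refl) as A3.
    rewrite onS_fc in A1, A2, A3. set (k := a / sqrt 3) in *. clearbody k.
    unfold norm2, dot in *; destruct s; simpl in *;
    pose proof (Z (vy p) ltac:(lra)); pose proof (Z (vz p) ltac:(lra)); pose proof (Rle_0_sqr (vx p - k)); pose proof (Rle_0_sqr (vx p + k)); pose proof (Rle_0_sqr (vy p - k)); pose proof (Rle_0_sqr (vy p + k)); pose proof (Rle_0_sqr (vz p - k)); pose proof (Rle_0_sqr (vz p + k)); unfold Rsqr in *; nra.
  - pose proof (Hp true s true eq_refl) as A1. pose proof (Hp true s false eq_refl) as A2.
    pose proof (Hp false s true eq_refl) as A3.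
    rewrite onS_fc in A1, A2, A3. set (k := a / sqrt 3) in *. clearbody k.
    unfold norm2, dot in *; destruct s; simpl in *;
    pose proof (Z (vx p) ltac:(lra)); pose proof (Z (vz p) ltac:(lra)); pose proof (Rle_0_sqr (vx p - k)); pose proof (Rle_0_sqr (vx p + k)); pose proof (Rle_0_sqr (vy p - k)); pose proof (Rle_0_sqr (vy p + k)); pose proof (Rle_0_sqr (vz p - k)); pose proof (Rle_0_sqr (vz p + k)); unfold Rsqr in *; nra.
  - pose proof (Hp true true s eq_refl) as A1. pose proof (Hp true false s eq_refl) as A2.
    pose proof (Hp false true s eq_refl) as A3.
    rewrite onS_fc in A1, A2, A3. set (k := a / sqrt 3) in *. clearbody k.
    unfold norm2, dot in *; destruct s; simpl in *;
    pose proof (Z (vx p) ltac:(lra)); pose proof (Z (vy p) ltac:(lra)); pose proof (Rle_0_sqr (vx p - k)); pose proof (Rle_0_sqr (vx p + k)); pose proof (Rle_0_sqr (vy p - k)); pose proof (Rle_0_sqr (vy p + k)); pose proof (Rle_0_sqr (vz p - k)); pose proof (Rle_0_sqr (vz p + k)); unfold Rsqr in *; nra.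
Qed.

Lemma acos_strict x y : -1 <= x -> x < y -> y <= 1 -> acos y < acos x.
Proof.
  intros. pose proof (acos_bound x); pose proof (acos_bound y).
  apply cos_decreasing_0; try lra.
  rewrite !cos_acos; lra.
Qed.

Definition gg (a : R) := (3 - a ^ 2) / (3 * (a ^ 2 - 1)).

Lemma gg_eq a : a * a > 1 -> gg a = (2 * / (a * a - 1) - 1) / 3.
Proof. intros. unfold gg. simpl. field. lra. Qed.

Lemma gg_gt a : a * a > 1 -> gg a > -1/3.
Proof. intros. rewrite gg_eq by lra. assert (0 < / (a*a-1)) by (apply Rinv_0_lt_compat; lra). lra. Qed.

Lemma gg_le1 a : a * a > 3/2 -> gg a < 1.
Proof. intros. rewrite gg_eq by lra.
  assert (/ (a*a-1) < / (1/2)) by (apply Rinv_lt_contravar; nra).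
  assert (/ (1/2) = 2) by field. lra. Qed.

Lemma gg_dec a1 a2 : 1 < a1 * a1 -> a1 * a1 < a2 * a2 -> gg a2 < gg a1.
Proof. intros. rewrite !gg_eq by lra.
  assert (/ (a2*a2-1) < / (a1*a1-1)) by (apply Rinv_lt_contravar; nra). lra. Qed.

Lemma gg_lim : forall eps : R, eps > 0 -> exists M : R, forall a : R, a > M ->
        Rabs (acos (gg a) - acos (-1/3)) < eps.
Proof.
  intros eps He.
  set (A := acos (-1/3)).
  assert (HA : 0 < A < PI) by (apply acos_bound_lt; lra).
  set (e := Rmin (eps/2) (A/2)).
  assert (He1 : e <= eps/2) by apply Rmin_l.
  assert (He2 : e <= A/2) by apply Rmin_r.
  assert (He0 : 0 < e) by (apply Rmin_glb_lt; lra).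
  set (y0 := cos (A - e)).
  assert (Hy0 : -1/3 < y0).
  { replace (-1/3) with (cos A) by (apply cos_acos; lra).
    apply cos_decreasing_1; lra. }
  assert (Hy1 : y0 <= 1) by apply COS_bound.
  assert (HAy : acos y0 = A - e) by (apply acos_cos; lra).
  set (d := 3 * y0 + 1).
  assert (Hd : 0 < d) by (unfold d; lra).
  exists (2 / d + 2). intros a Ha.
  assert (H2d : 0 < 2 / d) by (apply Rdiv_lt_0_compat; lra).
  assert (Haa : a * a - 1 > 2 / d) by nra.
  assert (Hinv : / (a * a - 1) < / (2 / d)) by (apply Rinv_lt_contravar; nra).
  assert (Hi2 : / (2 / d) = d / 2) by (field; lra).
  assert (Hg : gg a < y0).
  { rewrite gg_eq by nra. unfold d in *. lra. }
  assert (Hg1 : gg a > -1/3) by (apply gg_gt; nra).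
  assert (acos y0 < acos (gg a)) by (apply acos_strict; lra).
  assert (acos (gg a) < A) by (apply acos_strict; lra).
  rewrite Rabs_left; lra.
Qed.

Theorem mainTheorem18 :
  (* (1) *)
  (forall a : R, a > sqrt 3 ->
     (exists p : vec3, norm2 p < 1 /\
        forall b1 b2 : bool, onS (fc a b1 b2 true) p) /\
     finite_oct a) /\
  (ideal_oct (sqrt 3) /\ oct_dihedral (sqrt 3) (PI / 2)) /\
  (exists f : R -> R,
     (forall a : R, a >= sqrt 3 -> oct_dihedral a (f a)) /\
     (forall a1 a2 : R, sqrt 3 <= a1 -> a1 < a2 -> f a1 < f a2) /\
     (forall a : R, a >= sqrt 3 -> f a < acos (-1/3)) /\
     (forall eps : R, eps > 0 -> exists M : R, forall a : R, a > M ->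
        Rabs (f a - acos (-1/3)) < eps)) /\
  (* (2) *)
  spheres_touch (fc (sqrt (3/2)) true true true) (fc (sqrt (3/2)) true false true) /\
  (* (3) *)
  (forall a : R, 1 < a < sqrt (3/2) ->
     spheres_disjoint (fc a true true true) (fc a true false true)) /\
  (* (4) *)
  (forall a : R, a > sqrt (3/2) ->
     exists alpha : R,
       meet_at_angle (fc a true true true) (fc a true false true) alpha /\
       cos alpha = (3 - a ^ 2) / (3 * (a ^ 2 - 1))) /\
  (* (5) *)
  (forall a : R, sqrt (3/2) < a < sqrt 3 -> hyperideal_oct a).
Proof.
  assert (S3 := sqrt3_sq). assert (S3p := sqrt3_pos).
  assert (Sh : sqrt (3/2) * sqrt (3/2) = 3/2) by (apply sqrt_sqrt; lra).
  assert (Shp : 0 < sqrt (3/2)) by (apply sqrt_lt_R0; lra).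
  split; [|split; [|split; [|split; [|split; [|split]]]]].
  - intros a Ha.
    destruct (t_ex (a / sqrt 3) (k_gt1 a Ha)) as [t [Ht1 Ht2]].
    split.
    + exists (mkV 0 0 t). split.
      * unfold norm2, dot; simpl; nra.
      * intros b1 b2. rewrite onS_fc. unfold norm2, dot; destruct b1, b2; simpl; nra.
    + intros i s Hi. destruct (vertex_meet a t Ht1 i s Hi) as [p [Hp1 Hp2]].
      exists p; split; [unfold open_ball; nra | exact Hp2].
  - split.
    + intros i s Hi.
      assert (K1 : sqrt 3 / sqrt 3 = 1) by (field; lra).
      assert (Ht : 1 * 1 - 2 * (sqrt 3 / sqrt 3) * 1 + 1 = 0) by (rewrite K1; lra).
      destruct (vertex_meet (sqrt 3) 1 Ht i s Hi) as [p [Hp1 Hp2]].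
      exists p; split; [unfold unit_sphere; lra | exact Hp2].
    + apply oct_dihedral_gen; try lra.
      * pose proof PI_RGT_0; lra.
      * rewrite cos_PI2. simpl. rewrite Rmult_1_r, S3. field.
  - exists (fun a => acos (gg a)). split; [|split; [|split]].
    + intros a Ha. destruct (Rle_lt_or_eq_dec _ _ (Rge_le _ _ Ha)) as [Hlt|Heq].
      * destruct (gt_sqrt_sq 3 a ltac:(lra) Hlt) as [A1 A2].
        apply oct_dihedral_gen; try lra.
        -- apply acos_bound.
        -- apply cos_acos. pose proof (gg_gt a ltac:(lra)). pose proof (gg_le1 a ltac:(lra)). unfold gg in *; lra.
      * subst a. apply oct_dihedral_gen; try lra.
        -- apply acos_bound.
        -- apply cos_acos. pose proof (gg_gt (sqrt 3) ltac:(lra)). pose proof (gg_le1 (sqrt 3) ltac:(lra)). unfold gg in *; lra.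
    + intros a1 a2 H1 H2. apply acos_strict.
      * pose proof (gg_gt a2 ltac:(nra)). lra.
      * apply gg_dec; nra.
      * pose proof (gg_le1 a1 ltac:(nra)). lra.
    + intros a Ha. apply acos_strict.
      * lra.
      * apply gg_gt. nra.
      * pose proof (gg_le1 a ltac:(nra)). lra.
    + exact gg_lim.
  - set (k := sqrt (3/2) / sqrt 3).
    assert (Kk : k * k = 1/2) by (unfold k; rewrite k_sq, Sh; field).
    assert (Kp : 0 < k) by (unfold k; apply Rdiv_lt_0_compat; lra).
    exists (mkV k 0 k). split.
    + split; rewrite onS_fc; fold k; unfold norm2, dot; simpl; nra.
    + intros [x y z] [A1 A2]. rewrite onS_fc in A1, A2. fold k in A1, A2.
      unfold norm2, dot in *; simpl in *.
      assert (Hy : y = 0) by (apply (Rmult_eq_reg_l k); lra).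
      subst y.
      pose proof (Rle_0_sqr (x - k)). pose proof (Rle_0_sqr (z - k)). unfold Rsqr in *.
      assert (x = k) by nra. assert (z = k) by nra. subst; reflexivity.
  - intros a [Ha1 Ha2] [q [A1 A2]].
    pose proof (lt_sqrt_sq (3/2) a ltac:(lra) ltac:(lra) Ha2) as Aa.
    pose proof (k_sq a) as K.
    rewrite onS_fc in A1, A2.
    assert (Kp : 0 < a / sqrt 3) by (apply Rdiv_lt_0_compat; lra).
    set (k := a / sqrt 3) in *. clearbody k.
    unfold norm2, dot in *; simpl in *.
    assert (Hy : vy q = 0) by (apply (Rmult_eq_reg_l k); lra).
    pose proof (Rle_0_sqr (vx q - k)). pose proof (Rle_0_sqr (vz q - k)). unfold Rsqr in *.
    nra.
  - intros a Ha.
    destruct (gt_sqrt_sq (3/2) a ltac:(lra) Ha) as [A1 A2].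
    exists (acos (gg a)). split.
    + pose proof (gg_gt a ltac:(lra)). pose proof (gg_le1 a ltac:(lra)).
      assert (OD := oct_dihedral_gen a (acos (gg a)) A2 A1 (acos_bound _) (cos_acos (gg a) ltac:(lra))).
      destruct (OD true true true) as [_ [HH _]]; exact HH.
    + pose proof (gg_gt a ltac:(lra)). pose proof (gg_le1 a ltac:(lra)).
      exact (cos_acos (gg a) ltac:(lra)).
  - intros a [Ha1 Ha2].
    destruct (gt_sqrt_sq (3/2) a ltac:(lra) Ha1) as [A1 A2].
    pose proof (lt_sqrt_sq 3 a ltac:(lra) ltac:(lra) Ha2).
    split.
    + apply adj_int; lra.
    + intros i s _. apply no_vertex; lra.
Qed.
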